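(* Let $t$ be a positive integer and let $G$ be a graph on $4t-1$ vertices with $\alpha(G)=2$ and $\mathrm{cm}(G)\le t-1$. For any disjoint subsets $A,B\subseteq V(G)$ with $|A|\le |B|=t-1$, the bipartite subgraph $H$ of $G$ formed by the edges of $G$ between $A$ and $B$ contains a matching of size $|A|$.
   Context: All graphs are finite and simple. $\alpha(G)$ is the independence number. A matching $M$ in $G$ is connected if for every two edges of $M$ there is an edge of $G$ joining an endpoint of one to an endpoint of the other; $\mathrm{cm}(G)$ is the maximum size of a connected matching in $G$. *)

(* Defs.v *)
From mathcomp Require Import all_boot.
Set Implicit Arguments. Unset Strict Implicit. Unset Printing Implicit Defensive.

Definition simple_graph (T : finType) (e : rel T) : Prop :=
  symmetric e /\ irreflexive e.

Definition is_edge (T : finType) (e : rel T) (f : {set T}) : bool :=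
  [exists x, exists y, (f == [set x; y]) && e x y].

Definition independent (T : finType) (e : rel T) (S : {set T}) : bool :=
  [forall x in S, forall y in S, ~~ e x y].

Definition alpha (T : finType) (e : rel T) : nat :=
  \max_(S : {set T} | independent e S) #|S|.

Definition matching (T : finType) (e : rel T) (M : {set {set T}}) : bool :=
  [forall f in M, is_edge e f] &&
  [forall f1 in M, forall f2 in M, (f1 != f2) ==> [disjoint f1 & f2]].

Definition connected_matching (T : finType) (e : rel T) (M : {set {set T}}) : bool :=
  matching e M &&
  [forall f1 in M, forall f2 in M,
     (f1 != f2) ==> [exists x in f1, exists y in f2, e x y]].

Definition cm (T : finType) (e : rel T) : nat :=
  \max_(M : {set {set T}} | connected_matching e M) #|M|.

(* Main.v *)
Require Import Defs.
From mathcomp Require Import all_boot.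
From mathcomp Require Import zify.
Set Implicit Arguments. Unset Strict Implicit. Unset Printing Implicit Defensive.

Definition nbh (T : finType) (r : rel T) (R S : {set T}) : {set T} :=
  [set y in R | [exists x in S, r x y]].

Definition hallc (T : finType) (r : rel T) (L R : {set T}) : bool :=
  [forall S : {set T}, (S \subset L) ==> (#|S| <= #|nbh r R S|)].

Lemma nbhU (T : finType) (r : rel T) R S1 S2 :
  nbh r R (S1 :|: S2) = nbh r R S1 :|: nbh r R S2.
Proof.
apply/setP=> y; rewrite !inE.
case: (y \in R) => //=.
apply/existsP/orP.
- case=> x /andP[]; rewrite inE => /orP[] xS rxy; [left|right];
  by apply/existsP; exists x; rewrite xS.
- case=> /existsP[x /andP[xS rxy]]; exists x; by rewrite inE xS ?orbT rxy.
Qed.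

Lemma nbhD (T : finType) (r : rel T) R R' S :
  nbh r (R :\: R') S = nbh r R S :\: R'.
Proof. by apply/setP=> y; rewrite !inE; case: (y \in R'); case: (y \in R). Qed.

Lemma hall (T : finType) (r : rel T) n (L R : {set T}) : #|L| <= n -> hallc r L R ->
  exists f : T -> T, {in L &, injective f} /\
    (forall x, x \in L -> f x \in R /\ r x (f x)).
Proof.
elim: n L R => [|n IH] L R HL /forallP HH.
  exists id; split; first by move=> x y _ _.
  move=> x xL; have : 0 < #|L| by apply/card_gt0P; exists x.
  by rewrite leqn0 in HL; rewrite (eqP HL).
case: (boolP [exists S : {set T}, [&& S \subset L, S != set0, S != L & #|nbh r R S| <= #|S|]]).
  case/existsP => S0 /and4P [S0L S0n S0L' tight].
  have ltS0 : #|S0| < #|L| by apply: proper_card; rewrite properEneq S0L' S0L.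
  have HS0 : hallc r S0 R.
    apply/forallP => S; apply/implyP => SS0.
    by have := HH S; rewrite (subset_trans SS0 S0L).
  have [f1 [inj1 P1]] := IH S0 R (ltac:(lia)) HS0.
  set N0 := nbh r R S0.
  have S0pos : 0 < #|S0| by rewrite card_gt0.
  have HD : hallc r (L :\: S0) (R :\: N0).
    apply/forallP => S; apply/implyP => SD.
    have SL : S \subset L by apply: subset_trans SD (subsetDl _ _).
    have I0 : #|S :&: S0| = 0.
      apply/eqP; rewrite cards_eq0; apply/eqP/setP => x; rewrite !inE.
      apply/negbTE/negP => /andP[xS xS0].
      by have := subsetP SD x xS; rewrite inE xS0.
    have := HH (S :|: S0); rewrite subUset SL S0L /= nbhU nbhD.
    have := cardsU S S0; rewrite I0 subn0 => ->.
    have := cardsU (nbh r R S) N0.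
    have := cardsD (nbh r R S) N0.
    have := cardsUI (nbh r R S) N0.
    have : #|N0| <= #|S0| by [].
    move=> h1 h2 h3 h4; rewrite -/N0 => h5. lia.
  have [f2 [inj2 P2]] := IH (L :\: S0) (R :\: N0) (ltac:(rewrite cardsDS //; lia)) HD.
  exists (fun x => if x \in S0 then f1 x else f2 x); split.
    move=> x y xL yL /=.
    have f1N : forall z, z \in S0 -> f1 z \in N0.
      move=> z zS; have [zR rz] := P1 z zS; rewrite inE zR /=.
      by apply/existsP; exists z; rewrite zS.
    have f2N : forall z, z \in L -> z \notin S0 -> f2 z \notin N0.
      move=> z zL zS; have [] := P2 z; first by rewrite inE zS zL.
      by rewrite inE => /andP[].
    case: (boolP (x \in S0)) => xS; case: (boolP (y \in S0)) => yS.
    - exact: inj1.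
    - move=> E; have := f2N y yL yS; by rewrite -E f1N.
    - move=> E; have := f2N x xL xS; by rewrite E f1N.
    - by apply: inj2; rewrite inE ?xS ?yS ?xL ?yL.
  move=> x xL; case: (boolP (x \in S0)) => xS.
    exact: P1.
  have [] := P2 x; first by rewrite inE xS xL.
  by rewrite inE => /andP[_ ->].
move/existsPn => Hn.
case: (set_0Vmem L) => [L0 | [x0 x0L]].
  by exists id; split; [move=> x y _ _ | move=> x; rewrite L0 inE].
have : 0 < #|nbh r R [set x0]|.
  by have := HH [set x0]; rewrite sub1set x0L cards1.
case/card_gt0P => y0; rewrite inE => /andP[y0R /existsP[x1]].
rewrite inE => /andP[/eqP -> rxy0].
have HD : hallc r (L :\ x0) (R :\ y0).
  apply/forallP => S; apply/implyP => SD.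
  case: (set_0Vmem S) => [-> | [s sS]]; first by rewrite cards0.
  have SL : S \subset L by apply: subset_trans SD (subsetDl _ _).
  have Sn : S != set0 by apply/set0Pn; exists s.
  have SL' : S != L.
    apply/eqP => E; have := subsetP SD x0; rewrite E x0L !inE eqxx.
    by move=> /(_ isT).
  have := Hn S; rewrite SL Sn SL' /= -ltnNge => lt.
  rewrite nbhD; have := cardsD1 y0 (nbh r R S).
  by case: (y0 \in nbh r R S) => /=; lia.
have [f2 [inj2 P2]] := IH (L :\ x0) (R :\ y0) (ltac:(have := cardsD1 x0 L; rewrite x0L; lia)) HD.
exists (fun x => if x == x0 then y0 else f2 x); split.
  move=> x y xL yL /=.
  have f2N : forall z, z \in L -> z != x0 -> f2 z != y0.
    move=> z zL zS; have [] := P2 z; first by rewrite !inE zS zL.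
    by rewrite !inE => /andP[].
  case: (eqVneq x x0) => [->|xn]; case: (eqVneq y x0) => [->|yn] //.
  - by move=> E; have := f2N y yL yn; rewrite -E eqxx.
  - by move=> E; have := f2N x xL xn; rewrite E eqxx.
  - by apply: inj2; rewrite !inE ?xn ?yn ?xL ?yL.
move=> x xL; case: (eqVneq x x0) => [->|xn]; first by [].
have [] := P2 x; first by rewrite !inE xn xL.
by rewrite !inE => /andP[_ ->].
Qed.
Lemma indep3 (T : finType) (e : rel T) : simple_graph e -> alpha e = 2 ->
  forall x y z, x != y -> x != z -> y != z -> ~~ e x y -> ~~ e x z -> ~~ e y z -> False.
Proof.
move=> [sym irr] al x y z xy xz yz exy exz eyz.
have ind : independent e [set x; y; z].
  apply/forallP => u; apply/implyP => uS; apply/forallP => v; apply/implyP => vS.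
  move: uS vS; rewrite !inE => /orP[/orP[]|] /eqP-> /orP[/orP[]|] /eqP->;
    by rewrite ?irr // ?(sym y x) ?(sym z x) ?(sym z y).
have c3 : #|[set x; y; z]| = 3.
  have -> : [set x; y; z] = x |: (y |: [set z]) by apply/setP=> w; rewrite !inE orbA.
  by rewrite !cardsU1 cards1 !inE (negbTE xy) (negbTE xz) (negbTE yz).
have : #|[set x; y; z]| <= alpha e by rewrite /alpha; exact: (leq_bigmax_cond _ ind).
by rewrite al c3.
Qed.

Lemma disjP (T : finType) (A B : {set T}) :
  (forall u, u \in A -> u \in B -> False) -> [disjoint A & B].
Proof.
move=> H; rewrite -setI_eq0; apply/eqP/setP => u; rewrite !inE.
by apply/negbTE/negP => /andP[uA uB]; apply: (H u).
Qed.

Lemma build_match (T : finType) (e : rel T) (L R : {set T}) (f : T -> T) :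
  [disjoint L & R] -> {in L &, injective f} ->
  (forall x, x \in L -> f x \in R /\ e x (f x)) ->
  matching e [set [set x; f x] | x in L] /\ #|[set [set x; f x] | x in L]| = #|L|.
Proof.
move=> dis inj P.
have fL : forall y, y \in L -> (f y \in L) = false.
  by move=> y yL; apply: (disjointFl dis); exact: (P y yL).1.
split.
  apply/andP; split.
    apply/forallP => F; apply/implyP => /imsetP[x xL ->].
    apply/existsP; exists x; apply/existsP; exists (f x); rewrite eqxx /=.
    exact: (P x xL).2.
  apply/forallP=> F1; apply/implyP => /imsetP[x xL ->].
  apply/forallP=> F2; apply/implyP => /imsetP[y yL ->]; apply/implyP => ne.
  have xy : x != y by apply: contraNneq ne => ->.
  apply/disjP => u; rewrite !inE => /orP[]/eqP-> /orP[]/eqP E.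
  - by rewrite E eqxx in xy.
  - by have := fL y yL; rewrite -E xL.
  - by have := fL x xL; rewrite E yL.
  - by have := inj x y xL yL E; move/eqP; rewrite (negbTE xy).
rewrite card_in_imset //.
move=> x y xL yL /= E.
have : x \in [set y; f y] by rewrite -E !inE eqxx.
rewrite !inE => /orP[/eqP //|/eqP E2].
by have := fL y yL; rewrite -E2 xL.
Qed.

Lemma conn_match (T : finType) (e : rel T) (L R : {set T}) (f : T -> T) :
  [disjoint L & R] -> {in L &, injective f} ->
  (forall x, x \in L -> f x \in R /\ e x (f x)) ->
  (forall x y, x \in L -> y \in L -> x != y ->
     [|| e x y, e x (f y), e (f x) y | e (f x) (f y)]) ->
  #|L| <= cm e.
Proof.
move=> dis inj P C.
have [Mm cM] := build_match dis inj P.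
rewrite -cM /cm.
apply: leq_bigmax_cond.
rewrite /connected_matching Mm /=.
apply/forallP=> F1; apply/implyP => /imsetP[x xL ->].
apply/forallP=> F2; apply/implyP => /imsetP[y yL ->]; apply/implyP => ne.
have xy : x != y by apply: contraNneq ne => ->.
have := C x y xL yL xy.
case/or4P => h.
- by apply/existsP; exists x; rewrite !inE eqxx /=; apply/existsP; exists y; rewrite !inE eqxx.
- by apply/existsP; exists x; rewrite !inE eqxx /=; apply/existsP; exists (f y); rewrite !inE eqxx orbT.
- by apply/existsP; exists (f x); rewrite !inE eqxx orbT /=; apply/existsP; exists y; rewrite !inE eqxx.
- by apply/existsP; exists (f x); rewrite !inE eqxx orbT /=; apply/existsP; exists (f y); rewrite !inE eqxx orbT.
Qed.

Lemma subset_card (T : finType) (A : {set T}) n : n <= #|A| ->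
  exists B : {set T}, B \subset A /\ #|B| = n.
Proof.
elim: n => [|n IH] h; first by exists (set0 : {set T}); rewrite sub0set cards0.
have [B [BA cB]] := IH (ltnW h).
have : 0 < #|A :\: B| by rewrite cardsDS //; lia.
case/card_gt0P => a; rewrite inE => /andP[aB aA].
exists (a |: B); rewrite subUset sub1set aA BA cardsU1 aB cB; split => //.
Qed.

Lemma nbh_sub (T : finType) (r : rel T) R S : nbh r R S \subset R.
Proof. by apply/subsetP => y; rewrite inE => /andP[]. Qed.

Lemma clique_hall_false (t : nat) (T : finType) (e : rel T) :
  0 < t -> cm e <= t - 1 -> forall K : {set T},
  (forall x y, x \in K -> y \in K -> x != y -> e x y) ->
  #|K| = t -> hallc e K (~: K) -> False.
Proof.
move=> Ht hc K Kc cK HH.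
have [f [inj P]] := hall (n := #|K|) (leqnn _) HH.
have dis : [disjoint K & ~: K] by apply/disjP => u; rewrite inE => ->.
have := conn_match dis inj P (fun x y xK yK xy => introT orP (or_introl (Kc x y xK yK xy))).
lia.
Qed.

Lemma clique_small (t : nat) (T : finType) (e : rel T) :
  0 < t -> simple_graph e -> #|T| = 4 * t - 1 -> alpha e = 2 -> cm e <= t - 1 ->
  forall K : {set T},
  (forall x y, x \in K -> y \in K -> x != y -> e x y) -> #|K| <= t - 1.
Proof.
move=> Ht sg HT al hc K Kc.
rewrite leqNgt; apply/negP => big.
have [K0 [K0K cK0]] := subset_card (n := t) (ltac:(lia) : t <= #|K|).
have K0c : forall x y, x \in K0 -> y \in K0 -> x != y -> e x y.
  by move=> x y xK yK; apply: Kc; apply: (subsetP K0K).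
case: (boolP (hallc e K0 (~: K0))) => [HH|]; first exact: (clique_hall_false Ht hc K0c cK0 HH).
case/forallPn => S; rewrite negb_imply -ltnNge => /andP[SK0 lt].
have : 0 < #|S| by lia.
case/card_gt0P => z zS.
have zK0 : z \in K0 by apply: (subsetP SK0).
set N := nbh e (~: K0) S.
set W := ~: K0 :\: N.
have cS : #|S| <= t by rewrite -cK0; apply: subset_leq_card.
have cW : 2 * t <= #|W|.
  rewrite /W /N cardsDS ?nbh_sub //.
  have := cardsC K0; lia.
have Wc : forall x y, x \in W -> y \in W -> x != y -> e x y.
  move=> x y xW yW xy; apply/negPn/negP => nxy.
  have nz : forall w, w \in W -> ~~ e z w.
    move=> w; rewrite !inE => /andP[wN wK]; apply/negP => ezw.
    move: wN; rewrite wK /=; apply/negP/negPn/existsP; exists z; by rewrite zS ezw.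
  have zW : forall w, w \in W -> z != w.
    by move=> w; rewrite !inE => /andP[_ wK]; apply: contraNneq wK => <-.
  exact: (indep3 sg al (zW x xW) (zW y yW) xy (nz x xW) (nz y yW) nxy).
have [W1 [W1W cW1]] := subset_card (n := t) (ltac:(lia) : t <= #|W|).
have W1c : forall x y, x \in W1 -> y \in W1 -> x != y -> e x y.
  by move=> x y xK yK; apply: Wc; apply: (subsetP W1W).
apply: (clique_hall_false Ht hc W1c cW1).
apply/forallP => S1; apply/implyP => S1W1.
case: (set_0Vmem S1) => [-> | [s sS]]; first by rewrite cards0.
have sub : W :\: W1 \subset nbh e (~: W1) S1.
  apply/subsetP => w; rewrite inE => /andP[wW1 wW]; rewrite !inE wW1 /=.
  apply/existsP; exists s; rewrite sS /=.
  have sW1 : s \in W1 by apply: (subsetP S1W1).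
  apply: Wc; [by apply: (subsetP W1W) | exact: wW | ].
  by apply/eqP => E; move: wW1; rewrite -E sW1.
have := subset_leq_card sub.
rewrite cardsDS //.
have : #|S1| <= t by rewrite -cW1; apply: subset_leq_card.
lia.
Qed.

Lemma nonnbr_small (t : nat) (T : finType) (e : rel T) :
  0 < t -> simple_graph e -> #|T| = 4 * t - 1 -> alpha e = 2 -> cm e <= t - 1 ->
  forall v, #|[set u | (u != v) && ~~ e v u]| <= t - 1.
Proof.
move=> Ht sg HT al hc v; apply: (clique_small Ht sg HT al hc).
move=> x y; rewrite !inE => /andP[xv ex] /andP[yv ey] xy.
apply/negPn/negP => nxy.
by apply: (indep3 sg al (x := v) (y := x) (z := y)); rewrite // eq_sym.
Qed.

Lemma card_union_le (T : finType) (A B : {set T}) : #|A :|: B| <= #|A| + #|B|.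
Proof. rewrite cardsU; lia. Qed.

Lemma claim (t : nat) (T : finType) (e : rel T) :
  0 < t -> simple_graph e -> #|T| = 4 * t - 1 -> alpha e = 2 -> cm e <= t - 1 ->
  forall X Y : {set T},
  [disjoint X & Y] ->
  (forall x y, x \in X -> y \in Y -> ~~ e x y) ->
  (forall x x', x \in X -> x' \in X -> x != x' -> e x x') ->
  (forall y y', y \in Y -> y' \in Y -> y != y' -> e y y') ->
  #|X| <= t - 1 -> t <= #|X| + #|Y| ->
  2 * t + 1 + #|X| <= #|Y| + #|~: (X :|: Y) :\: [set p | [forall x in X, e x p]]|.
Proof.
move=> Ht sg HT al hc X Y dXY noe Xc Yc cX cXY.
have [sym irr] := sg.
have [Y0 [Y0Y cY0]] := subset_card (n := t - #|X|) (ltac:(lia) : t - #|X| <= #|Y|).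
set L := X :|: Y0.
set R := ~: (X :|: Y).
set P := [set p | [forall x in X, e x p]].
pose r1 := fun u w : T => ((u \in X) && e u w) || [&& u \in Y, w \in P & e u w].
have XY0 : forall u, u \in X -> (u \in Y0) = false.
  move=> u uX; apply/negbTE/negP => uY0.
  by have := disjointFr dXY uX; rewrite (subsetP Y0Y _ uY0).
have cL : #|L| = t.
  rewrite /L cardsU.
  have -> : X :&: Y0 = set0.
    by apply/setP => u; rewrite !inE; case: (boolP (u \in X)) => // /XY0 ->.
  rewrite cards0; lia.
have Nn := nonnbr_small Ht sg HT al hc.
case: (boolP (hallc r1 L R)) => [HH|].
  have [f [inj Pf]] := hall (n := #|L|) (leqnn _) HH.
  have dis : [disjoint L & R].
    apply/disjP => u; rewrite !inE => /orP[uX|uY0] /norP[uX' uY].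
      by rewrite uX in uX'.
    by rewrite (subsetP Y0Y _ uY0) in uY.
  have Pf' : forall x, x \in L -> f x \in R /\ e x (f x).
    move=> x xL; have [fR rx] := Pf x xL; split => //.
    by move: rx => /orP[/andP[]|/and3P[]].
  have := conn_match dis inj Pf'.
  have C : forall x y, x \in L -> y \in L -> x != y ->
     [|| e x y, e x (f y), e (f x) y | e (f x) (f y)].
    move=> x y; rewrite !inE => /orP[xX|xY0] /orP[yX|yY0] xy.
    - by rewrite Xc.
    - have [_] := Pf y (ltac:(by rewrite !inE yY0 orbT)).
      have yXf : (y \in X) = false by apply/negbTE/negP => yX'; rewrite XY0 in yY0.
      rewrite /r1 yXf /= => /and3P[_ fyP _].
      by move: fyP; rewrite inE => /forallP /(_ x); rewrite xX /= => ->; rewrite orbT.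
    - have [_] := Pf x (ltac:(by rewrite !inE xY0 orbT)).
      have xXf : (x \in X) = false by apply/negbTE/negP => xX'; rewrite XY0 in xY0.
      rewrite /r1 xXf /= => /and3P[_ fxP _].
      by move: fxP; rewrite inE => /forallP /(_ y); rewrite yX /= sym => ->; rewrite !orbT.
    - by rewrite Yc // ?(subsetP Y0Y).
  move=> /(_ C); lia.
case/forallPn => S; rewrite negb_imply -ltnNge => /andP[SL lt].
have cS : #|S| <= t by rewrite -cL; apply: subset_leq_card.
case: (boolP [exists x in S, x \in X]).
  case/existsP => x /andP[xS xX].
  have cov : [set: T] \subset [set u | (u != x) && ~~ e x u] :|: X :|: nbh r1 R S.
    apply/subsetP => u _; rewrite !inE.
    case: (boolP (u == x)) => [/eqP ->|ux]; first by apply/orP; left; apply/orP; right.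
    case: (boolP (e x u)) => exu /=; last by [].
    case: (boolP (u \in X)) => uX; first by [].
    case: (boolP (u \in Y)) => uY; first by have := noe x u xX uY; rewrite exu.
    rewrite /=.
    by apply/existsP; exists x; rewrite xS /r1 xX exu.
  have := subset_leq_card cov; rewrite cardsT.
  have := card_union_le ([set u | (u != x) && ~~ e x u] :|: X) (nbh r1 R S).
  have := card_union_le [set u | (u != x) && ~~ e x u] X.
  have := Nn x.
  lia.
move/existsPn => SX.
have : 0 < #|S| by lia.
case/card_gt0P => y yS.
have yY0 : y \in Y0.
  have := subsetP SL y yS; rewrite !inE => /orP[yX|//].
  by have := SX y; rewrite yS yX.
have yY := subsetP Y0Y y yY0.
have SY0 : S \subset Y0.
  apply/subsetP => u uS; have := subsetP SL u uS; rewrite !inE => /orP[uX|//].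
  by have := SX u; rewrite uS uX.
have cSY0 : #|S| <= #|Y0| by apply: subset_leq_card.
have cov : [set: T] \subset [set u | (u != y) && ~~ e y u] :|: Y :|: nbh r1 R S :|: (R :\: P).
  apply/subsetP => u _; rewrite in_setU in_setU in_setU.
  case: (boolP (u == y)) => [/eqP ->|uy]; first by rewrite yY /= ?orbT.
  case: (boolP (e y u)) => eyu; last by rewrite inE uy eyu.
  case: (boolP (u \in X)) => uX; first by have := noe u y uX yY; rewrite sym eyu.
  case: (boolP (u \in Y)) => uY; first by apply/orP; left; apply/orP; left; apply/orP; right.
  have uR : u \in R by rewrite !inE negb_or uX uY.
  case: (boolP (u \in P)) => uP.
    apply/orP; left; apply/orP; right; rewrite inE uR /=.
    by apply/existsP; exists y; rewrite yS /r1 yY uP eyu orbT.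
  by apply/orP; right; rewrite inE uP uR.
have := subset_leq_card cov; rewrite cardsT.
have := card_union_le ([set u | (u != y) && ~~ e y u] :|: Y :|: nbh r1 R S) (R :\: P).
have := card_union_le ([set u | (u != y) && ~~ e y u] :|: Y) (nbh r1 R S).
have := card_union_le [set u | (u != y) && ~~ e y u] Y.
have := Nn y.
lia.
Qed.

Theorem lemma2p3 (t : nat) (T : finType) (e : rel T) :
  0 < t ->
  simple_graph e ->
  #|T| = 4 * t - 1 ->
  alpha e = 2 ->
  cm e <= t - 1 ->
  forall A B : {set T},
    [disjoint A & B] ->
    #|A| <= #|B| ->
    #|B| = t - 1 ->
    exists M : {set {set T}},
      matching e M /\
      (forall f, f \in M ->
         exists a b, a \in A /\ b \in B /\ f = [set a; b]) /\
      #|M| = #|A|.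
Proof.
move=> Ht sg HT al hc A B dAB cAB cB.
have [sym irr] := sg.
case: (boolP (hallc e A B)) => [HH|].
  have [f [inj Pf]] := hall (n := #|A|) (leqnn _) HH.
  have [Mm cM] := build_match dAB inj Pf.
  exists [set [set x; f x] | x in A]; split => //; split => //.
  move=> F /imsetP[x xA ->]; exists x, (f x); split => //; split => //.
  exact: (Pf x xA).1.
case/forallPn => S; rewrite negb_imply -ltnNge => /andP[SA lt].
exfalso.
set X := S.
set Y := B :\: nbh e B X.
have lt' : #|nbh e B X| < #|X| := lt.
clear lt.
have cY : #|Y| = t - 1 - #|nbh e B X| by rewrite /Y cardsDS ?nbh_sub // cB.
have cX : #|X| <= #|A| by apply: subset_leq_card.
have cNB : #|nbh e B X| <= t - 1 by rewrite -cB; apply: subset_leq_card; apply: nbh_sub.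
have noe : forall x y, x \in X -> y \in Y -> ~~ e x y.
  move=> x y xX; rewrite /Y !inE => /andP[yN yB]; apply/negP => exy.
  by move: yN; rewrite yB /=; apply/negP/negPn/existsP; exists x; rewrite xX exy.
have dXY : [disjoint X & Y].
  apply/disjP => u uX; rewrite /Y inE => /andP[_ uB].
  by have := disjointFr dAB (subsetP SA u uX); rewrite uB.
have : 0 < #|Y| by lia.
case/card_gt0P => y0 y0Y.
have : 0 < #|X| by lia.
case/card_gt0P => x0 x0X.
have neqXY : forall x y, x \in X -> y \in Y -> x != y.
  move=> x y xX yY; apply/eqP => E; subst.
  by have := disjointFr dXY xX; rewrite yY.
have Xc : forall x x', x \in X -> x' \in X -> x != x' -> e x x'.
  move=> x x' xX x'X xx'; apply/negPn/negP => nx.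
  exact: (indep3 sg al xx' (neqXY _ _ xX y0Y) (neqXY _ _ x'X y0Y) nx (noe _ _ xX y0Y) (noe _ _ x'X y0Y)).
have Yc : forall y y', y \in Y -> y' \in Y -> y != y' -> e y y'.
  move=> y y' yY y'Y yy'; apply/negPn/negP => ny.
  have h1 : x0 != y := neqXY _ _ x0X yY.
  have h2 : x0 != y' := neqXY _ _ x0X y'Y.
  exact: (indep3 sg al h1 h2 yy' (noe _ _ x0X yY) (noe _ _ x0X y'Y) ny).
have noe' : forall y x, y \in Y -> x \in X -> ~~ e y x.
  by move=> y x yY xX; rewrite sym; apply: noe.
have dYX : [disjoint Y & X] by rewrite disjoint_sym.
have c1 := claim Ht sg HT al hc dXY noe Xc Yc (ltac:(lia)) (ltac:(lia)).
have c2 := claim Ht sg HT al hc dYX noe' Yc Xc (ltac:(lia)) (ltac:(lia)).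
rewrite setUC in c2.
set R := ~: (X :|: Y) in c1 c2.
set PX := [set p | [forall x in X, e x p]] in c1.
set PY := [set p | [forall x in Y, e x p]] in c2.
have I0 : (R :\: PX) :&: (R :\: PY) = set0.
  apply/setP => v; rewrite !inE; apply/negbTE/negP.
  case/andP => /andP[vX vR] /andP[vY _].
  move: vX vY => /forallPn[x]; rewrite negb_imply => /andP[xX exv].
  move=> /forallPn[y]; rewrite negb_imply => /andP[yY eyv].
  move: vR; rewrite negb_or => /andP[vnX vnY].
  have xv : x != v by apply/eqP => E; move: vnX; rewrite -E xX.
  have yv : y != v by apply/eqP => E; move: vnY; rewrite -E; move: yY; rewrite /Y !inE => ->.
  exact: (indep3 sg al (neqXY _ _ xX yY) xv yv (noe _ _ xX yY) exv eyv).
have cR : #|R| + #|X| + #|Y| = #|T|.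
  rewrite /R; have := cardsC (X :|: Y); rewrite cardsU (disjoint_setI0 dXY) cards0; lia.
have := cardsU (R :\: PX) (R :\: PY); rewrite I0 cards0 subn0.
have : #|(R :\: PX) :|: (R :\: PY)| <= #|R|.
  by apply: subset_leq_card; rewrite subUset !subsetDl.
lia.
Qed.
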